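(* Let the six equivalence operations $\equiv_0,\dots,\equiv_5$ on an ortholattice be as defined in the context. Then: (i) In every orthomodular lattice, $a' = a\equiv_i 0$ for all elements $a$ and each $i=0,1,\dots,5$. (ii) Let $t(a,b)$ be any term built from the variables $a,b$ and the constants $0,1$ using only the operations $\equiv_0,\dots,\equiv_5$ and orthocomplementation $'$. Then $t(a,b)$ is not equal in the free orthomodular lattice on the two generators $a,b$ (equivalently, is not identically equal in all orthomodular lattices) to any classical or quantum join or meet (in particular, to none of the implications $a\to_i b$, $i=0,\dots,5$, nor to their complements).
   Context: An orthomodular lattice (OML) is an ortholattice $(L,\cap,\cup,{}',0,1)$ satisfying $a\le b \Rightarrow b = a\cup(a'\cap b)$. The equivalence operations are $a\equiv_0 b=(a'\cup b)\cap(a\cup b')$, $a\equiv_1 b=(a\cup b')\cap(a'\cup(a\cap b))$, $a\equiv_2 b=(a\cup b')\cap(b\cup(a'\cap b'))$, $a\equiv_3 b=(a'\cup b)\cap(a\cup(a'\cap b'))$, $a\equiv_4 b=(a'\cup b)\cap(b'\cup(a\cap b))$, $a\equiv_5 b=(a\cap b)\cup(a'\cap b')$. The implications are $a\to_0 b=a'\cup b$, $a\to_1 b=a'\cup(a\cap b)$, $a\to_2 b=b\cup(a'\cap b')$, $a\to_3 b=(a'\cap b)\cup(a'\cap b')\cup(a\cap(a'\cup b))$, $a\to_4 b=(a\cap b)\cup(a'\cap b)\cup((a'\cup b)\cap b')$, $a\to_5 b=(a\cap b)\cup(a'\cap b)\cup(a'\cap b')$. A (classical or quantum) join, resp. meet,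 in two variables is a two-variable orthomodular-lattice term which, when evaluated in Boolean algebras, reduces to one of the classical joins $a\cup b$, $a\cup b'$, $a'\cup b$, $a'\cup b'$, resp. one of the classical meets $a\cap b$, $a\cap b'$, $a'\cap b$, $a'\cap b'$. *)

(* Defs.v *)
Record Ortholattice := {
  car :> Type;
  meet : car -> car -> car;
  join : car -> car -> car;
  compl : car -> car;
  zero : car;
  one : car;
  meetC : forall a b, meet a b = meet b a;
  joinC : forall a b, join a b = join b a;
  meetA : forall a b c, meet a (meet b c) = meet (meet a b) c;
  joinA : forall a b c, join a (join b c) = join (join a b) c;
  meet_absorb : forall a b, meet a (join a b) = a;
  join_absorb : forall a b, join a (meet a b) = a;
  join0 : forall a, join a zero = a;
  meet1 : forall a, meet a one = a;
  complK : forall a, compl (compl a) = a;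
  compl_anti : forall a b, meet a b = a -> meet (compl b) (compl a) = compl b;
  join_compl : forall a, join a (compl a) = one;
  meet_compl : forall a, meet a (compl a) = zero
}.

Arguments meet {_} _ _.
Arguments join {_} _ _.
Arguments compl {_} _.
Arguments zero {_}.
Arguments one {_}.

Definition le {L : Ortholattice} (a b : L) : Prop := meet a b = a.

Definition orthomodular (L : Ortholattice) : Prop :=
  forall a b : L, le a b -> b = join a (meet (compl a) b).

Definition boolean (L : Ortholattice) : Prop :=
  forall a b c : L, meet a (join b c) = join (meet a b) (meet a c).

Section Ops.
Variable L : Ortholattice.
Implicit Types a b : L.

Definition equiv0 a b := meet (join (compl a) b) (join a (compl b)).
Definition equiv1 a b := meet (join a (compl b)) (join (compl a) (meet a b)).
Definition equiv2 a b := meet (join a (compl b)) (join b (meet (compl a) (compl b))).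
Definition equiv3 a b := meet (join (compl a) b) (join a (meet (compl a) (compl b))).
Definition equiv4 a b := meet (join (compl a) b) (join (compl b) (meet a b)).
Definition equiv5 a b := join (meet a b) (meet (compl a) (compl b)).

(** equiv i for i = 0..5 (indices > 5 are never used: statements assume i <= 5) *)
Definition equiv (i : nat) : L -> L -> L :=
  match i with
  | 0 => equiv0 | 1 => equiv1 | 2 => equiv2 | 3 => equiv3 | 4 => equiv4
  | _ => equiv5
  end.

Definition classical (k : nat) : L -> L -> L :=
  match k with
  | 0 => fun a b => join a b
  | 1 => fun a b => join a (compl b)
  | 2 => fun a b => join (compl a) b
  | 3 => fun a b => join (compl a) (compl b)
  | 4 => fun a b => meet a b
  | 5 => fun a b => meet a (compl b)
  | 6 => fun a b => meet (compl a) b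
  | _ => fun a b => meet (compl a) (compl b)
  end.
End Ops.

Arguments equiv {L} i _ _.
Arguments classical {L} k _ _.

Inductive olterm : Type :=
| TVa | TVb | TZero | TOne
| TMeet : olterm -> olterm -> olterm
| TJoin : olterm -> olterm -> olterm
| TCompl : olterm -> olterm.

Fixpoint eval_ol (L : Ortholattice) (a b : L) (t : olterm) : L :=
  match t with
  | TVa => a | TVb => b | TZero => zero | TOne => one
  | TMeet s u => meet (eval_ol L a b s) (eval_ol L a b u)
  | TJoin s u => join (eval_ol L a b s) (eval_ol L a b u)
  | TCompl s => compl (eval_ol L a b s)
  end.

(** Terms built from a, b, 0, 1 using only equiv_0..equiv_5 and ' .
    (An index i > 5 in EEquiv is not allowed: see [wf_eqterm].) *)
Inductive eqterm : Type :=
| EVa | EVb | EZero | EOne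
| EEquiv : nat -> eqterm -> eqterm -> eqterm
| ECompl : eqterm -> eqterm.

Fixpoint wf_eqterm (t : eqterm) : Prop :=
  match t with
  | EEquiv i s u => i <= 5 /\ wf_eqterm s /\ wf_eqterm u
  | ECompl s => wf_eqterm s
  | _ => True
  end.

Fixpoint eval_eq (L : Ortholattice) (a b : L) (t : eqterm) : L :=
  match t with
  | EVa => a | EVb => b | EZero => zero | EOne => one
  | EEquiv i s u => equiv i (eval_eq L a b s) (eval_eq L a b u)
  | ECompl s => compl (eval_eq L a b s)
  end.

(** s is a (classical or quantum) join or meet: in every Boolean algebra
    it reduces to one fixed classical join/meet. *)
Definition join_or_meet (s : olterm) : Prop :=
  exists k, k <= 7 /\
    forall B : Ortholattice, boolean B ->
      forall a b : B, eval_ol B a b s = classical k a b.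

(* Main.v *)
Require Import Defs.
From Stdlib Require Import Bool Lia.

Section OL.
Variable L : Ortholattice.

Lemma join1 (a : L) : join a one = one.
Proof.
  assert (H : join a a = a).
  { rewrite <- (meet_absorb L a a) at 2. apply join_absorb. }
  rewrite <- (join_compl L a). rewrite joinA. rewrite H. reflexivity.
Qed.

Lemma meet0 (a : L) : meet a zero = zero.
Proof.
  rewrite <- (join0 L (meet a zero)).
  rewrite joinC. rewrite (meetC L a zero). apply join_absorb.
Qed.

Lemma one_meet (a : L) : meet one a = a.
Proof. rewrite meetC; apply meet1. Qed.

Lemma zero_join (a : L) : join zero a = a.
Proof. rewrite joinC; apply join0. Qed.

Lemma compl0 : compl (@zero L) = one.
Proof. rewrite <- (zero_join (compl zero)). apply join_compl. Qed.

Lemma meet_absorb' (a b : L) : meet b (join a b) = b.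
Proof. rewrite joinC; apply meet_absorb. Qed.

Lemma part1 (i : nat) : i <= 5 -> forall a : L, compl a = equiv i a zero.
Proof.
  intros Hi a.
  destruct i as [|[|[|[|[|[|i]]]]]]; try lia; simpl;
  unfold equiv0, equiv1, equiv2, equiv3, equiv4, equiv5;
  rewrite ?compl0, ?join0, ?meet1, ?meet0, ?join0, ?join1, ?one_meet, ?zero_join,
    ?meet1, ?join0, ?join1, ?one_meet, ?meet_absorb'; reflexivity.
Qed.
End OL.

Definition BoolOL : Ortholattice.
Proof.
  refine {| car := bool; meet := andb; join := orb; compl := negb;
            zero := false; one := true |};
  intros; repeat match goal with x : bool |- _ => destruct x end;
  simpl in *; try reflexivity; try discriminate.
Defined.

Lemma bool_om : orthomodular BoolOL.
Proof. intros a b H; unfold le in H; destruct a, b; simpl in *; congruence. Qed.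

Lemma bool_boolean : boolean BoolOL.
Proof. intros a b c; destruct a, b, c; reflexivity. Qed.

Lemma affine (t : eqterm) : wf_eqterm t -> exists c0 c1 c2 : bool,
  forall a b : bool, eval_eq BoolOL a b t = xorb c0 (xorb (andb c1 a) (andb c2 b)).
Proof.
  induction t; simpl; intros H.
  - exists false, true, false; intros a b; destruct a, b; reflexivity.
  - exists false, false, true; intros a b; destruct a, b; reflexivity.
  - exists false, false, false; intros a b; destruct a, b; reflexivity.
  - exists true, false, false; intros a b; destruct a, b; reflexivity.
  - destruct H as [Hn [H1 H2]].
    destruct (IHt1 H1) as [c0 [c1 [c2 E1]]].
    destruct (IHt2 H2) as [d0 [d1 [d2 E2]]].
    exists (negb (xorb c0 d0)), (xorb c1 d1), (xorb c2 d2).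
    intros a b. rewrite E1, E2.
    destruct n as [|[|[|[|[|[|n]]]]]]; try lia;
    destruct a, b, c0, c1, c2, d0, d1, d2; reflexivity.
  - destruct (IHt H) as [c0 [c1 [c2 E1]]].
    exists (negb c0), c1, c2. intros a b; rewrite E1.
    destruct a, b, c0, c1, c2; reflexivity.
Qed.

Lemma nonaffine (k : nat) : k <= 7 -> forall c0 c1 c2 : bool,
  exists a b : bool, xorb c0 (xorb (andb c1 a) (andb c2 b)) <> @classical BoolOL k a b.
Proof.
  intros Hk c0 c1 c2.
  destruct k as [|[|[|[|[|[|[|[|k]]]]]]]]; try lia;
  destruct c0, c1, c2;
  first [ exists true, true; simpl; discriminate
        | exists true, false; simpl; discriminate
        | exists false, true; simpl; discriminate
        | exists false, false; simpl; discriminate ].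
Qed.

Theorem theorem3 :
  (* (i) *)
  (forall L : Ortholattice, orthomodular L ->
     forall (i : nat), i <= 5 -> forall a : L, compl a = equiv i a zero)
  /\
  (* (ii): no equivalence term is identically equal, in all orthomodular
     lattices, to a classical or quantum join or meet *)
  (forall (t : eqterm) (s : olterm), wf_eqterm t -> join_or_meet s ->
     exists L : Ortholattice, orthomodular L /\
       exists a b : L, eval_eq L a b t <> eval_ol L a b s).
Proof.
  split.
  - intros L _ i Hi a. apply part1; exact Hi.
  - intros t s Ht [k [Hk Hs]].
    exists BoolOL. split; [exact bool_om|].
    destruct (affine t Ht) as [c0 [c1 [c2 E]]].
    destruct (nonaffine k Hk c0 c1 c2) as [a [b Hab]].
    exists a, b. rewrite E, (Hs BoolOL bool_boolean a b). exact Hab.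
Qed.
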